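(* For all $m,t\in\mathbb{N}$: $R_t(m,m)=0$, $R_t(m-1,m)=1$, and $R_t(m-2,m)=\min\{t,m\}+1$.
   Context: For a $t\times n$ matrix $\mathbf{v}$ over $\mathbb{F}_2$ with rows $\overline{v}_1,\dots,\overline{v}_t$, $\mathrm{wt}^{(t)}(\mathbf{v})=\left|\bigcup_{i} \mathrm{supp}(\overline{v}_i)\right|$ and $d^{(t)}(\mathbf{u},\mathbf{v})=\mathrm{wt}^{(t)}(\mathbf{u}-\mathbf{v})$. For a linear code $C\subseteq\mathbb{F}_2^n$, $C^t$ is the set of $t\times n$ matrices all of whose rows lie in $C$, and $R_t(C)$ is the smallest integer $\rho$ such that for every $\mathbf{v}\in\mathbb{F}_2^{t\times n}$ some $\mathbf{c}\in C^t$ has $d^{(t)}(\mathbf{v},\mathbf{c})\le\rho$. Reed–Muller codes $\mathrm{RM}(r,m)\subseteq\mathbb{F}_2^{2^m}$: $\mathrm{RM}(0,m)=\{\overline{0},\overline{1}\}$, $\mathrm{RM}(m,m)=\mathbb{F}_2^{2^m}$, and for $1\leq r\leq m-1$, $\mathrm{RM}(r,m)=\{(\overline{u},\overline{u}+\overline{v}) : \overline{u}\in \mathrm{RM}(r,m-1),\ \overline{v}\in\mathrm{RM}(r-1,m-1)\}$. (In particular $\mathrm{RM}(m-1,m)$ is the even-weight code of length $2^m$ and $\mathrm{RM}(m-2,m)$ is the extended Hamming code of length $2^m$; for $m=1$, $\mathrm{RM}(m-2,m)$ is interpreted as $\{\overline{0}\}$.) $R_t(r,m)=R_t(\mathrm{RM}(r,m))$.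 *)

(* Defs.v *)
(* Binary vectors over F_2 are represented as bitseq
   (bool = F_2, addition = xor (+)). *)
From mathcomp Require Import all_boot all_order all_algebra.
Set Implicit Arguments. Unset Strict Implicit. Unset Printing Implicit Defensive.

Definition xorseq (u v : bitseq) : bitseq := [seq p.1 (+) p.2 | p <- zip u v].

(* RM(0,m) = {0,1}; RM(m,m) = F_2^(2^m) (r >= m gives the full space, only
   r <= m is used); for 1 <= r <= m-1,
   RM(r,m) = {(u, u+v) : u in RM(r,m-1), v in RM(r-1,m-1)}. *)
Fixpoint RM (r m : nat) (w : bitseq) : bool :=
  match m with
  | 0 => size w == 1
  | m'.+1 =>
      if r == 0 then (w == nseq (2 ^ m'.+1) false) || (w == nseq (2 ^ m'.+1) true)
      else if m'.+1 <= r then size w == 2 ^ m'.+1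
      else [&& size w == 2 ^ m'.+1,
               RM r m' (take (2 ^ m') w)
             & RM r.-1 m' (xorseq (take (2 ^ m') w) (drop (2 ^ m') w))]
  end.

(* RM(m-2,m), with RM(-1,1) interpreted as the zero code {0} of length 2. *)
Definition RM_m2 (m : nat) : pred bitseq :=
  if m == 1 then (fun w => w == [:: false; false]) else RM (m - 2) m.

Definition rowseq t n (M : 'M[bool]_(t, n)) (i : 'I_t) : bitseq :=
  [seq M i j | j <- enum 'I_n].

Definition wt_t t n (M : 'M[bool]_(t, n)) : nat :=
  #|[set j : 'I_n | [exists i : 'I_t, M i j]]|.

Definition d_t t n (U V : 'M[bool]_(t, n)) : nat :=
  wt_t (\matrix_(i, j) (U i j (+) V i j)).

Definition covers (C : pred bitseq) (t n rho : nat) : Prop :=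
  forall v : 'M[bool]_(t, n), exists c : 'M[bool]_(t, n),
    (forall i, C (rowseq c i)) /\ d_t v c <= rho.

Definition is_Rt (C : pred bitseq) (t n rho : nat) : Prop :=
  covers C t n rho /\ forall rho', covers C t n rho' -> rho <= rho'.

(* Main.v *)
Require Import Defs.
From mathcomp Require Import all_boot all_order all_algebra.
From mathcomp Require Import zify.

Fixpoint cnt (f : nat -> bool) (w : bitseq) : nat :=
  if w is x :: w' then (x && f 0) + cnt (fun j => f j.+1) w' else 0.

Lemma cnt_ext f g w : (forall j, j < size w -> f j = g j) -> cnt f w = cnt g w.
Proof.
elim: w f g => [//|x w IH] f g H /=.
rewrite H // (IH (fun j => f j.+1) (fun j => g j.+1)) // => j Hj; apply: H.
by rewrite /= ltnS.
Qed.

Lemma cnt_take_drop f w p :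
  cnt f w = cnt f (take p w) + cnt (fun j => f (j + p)) (drop p w).
Proof.
elim: w f p => [|x w IH] f [|p] /=.
- by []. - by [].
- by congr (_ + _); apply: cnt_ext => j _; rewrite addn0.
rewrite -addnA; congr (_ + _); rewrite (IH _ p); congr (_ + _).
by apply: cnt_ext => j _; rewrite addnS.
Qed.

Lemma cnt_xor f u v : size u = size v ->
  odd (cnt f (xorseq u v)) = odd (cnt f u) (+) odd (cnt f v).
Proof.
elim: u f v => [|x u IH] f [|y v] //= [Hs].
rewrite /xorseq /= in IH *.
rewrite !oddD IH // !oddb.
by case: x; case: y; case: (f 0); case: (odd (cnt _ u)); case: (odd (cnt _ v)).
Qed.

Lemma size_xorseq u v : size (xorseq u v) = minn (size u) (size v).
Proof. by rewrite /xorseq size_map size_zip. Qed.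

Lemma cnt_nth f w : cnt f w = \sum_(j < size w) (nth false w j && f j).
Proof.
elim: w f => [|x w IH] f /=; first by rewrite big_ord0.
by rewrite big_ord_recl /= IH.
Qed.

Lemma cnt_row n (g : 'I_n -> bool) f :
  cnt f [seq g j | j <- enum 'I_n] = \sum_(j < n) (g j && f j).
Proof.
have -> : cnt f [seq g j | j <- enum 'I_n] =
   \sum_(0 <= j < size [seq g j | j <- enum 'I_n]) (nth false [seq g j | j <- enum 'I_n] j && f j).
  by rewrite big_mkord cnt_nth.
rewrite size_map size_enum_ord big_mkord; apply: eq_bigr => j _.
by rewrite (nth_map j) ?size_enum_ord // nth_ord_enum.
Qed.

Definition Sr {t n} (M : 'M[bool]_(t, n)) i (f : nat -> bool) := \sum_(j < n) (M i j && f j).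

Lemma cnt_rowseq t n (M : 'M[bool]_(t, n)) i f : cnt f (rowseq M i) = Sr M i f.
Proof. exact: cnt_row. Qed.

Lemma size_rowseq t n (M : 'M[bool]_(t, n)) i : size (rowseq M i) = n.
Proof. by rewrite size_map size_enum_ord. Qed.

Lemma odd_sum_xor (T : finType) (a b : T -> bool) :
  odd (\sum_j (a j (+) b j)) = odd (\sum_j a j) (+) odd (\sum_j b j).
Proof.
apply: (big_rec3 (fun x y z => odd x = odd y (+) odd z)) => // j x y z _ H.
rewrite !oddD H !oddb.
by case: (a j); case: (b j); case: (odd y); case: (odd z).
Qed.

Lemma odd_sum_and (T : finType) c (g : T -> bool) :
  odd (\sum_j (c && g j)) = c && odd (\sum_j g j).
Proof. by case: c => //=; rewrite big1. Qed.

Lemma odd_sum_exists (T : finType) (g : T -> bool) :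
  odd (\sum_j g j) -> exists j, g j.
Proof.
move=> H; apply/existsP; apply: contraLR H => /existsPn H.
by rewrite big1 // => j _; move: (H j); case: (g j).
Qed.

Definition bit b j := odd (j %/ 2 ^ b).

Lemma bit0n b : bit b 0 = false.
Proof. by rewrite /bit div0n. Qed.

Lemma bit_pow b i : bit b (2 ^ i) = (b == i).
Proof.
rewrite /bit; case: (ltngtP b i) => H.
- rewrite -(subnK (ltnW H)) expnD mulnK ?expn_gt0 //.
  rewrite oddX /=; move: H; rewrite -subn_gt0; by case: (i - b).
- by rewrite divn_small // ltn_exp2l.
- by rewrite H divnn expn_gt0.
Qed.

Lemma bit_shift b M j : b < M -> bit b (j + 2 ^ M) = bit b j.
Proof.
move=> H; rewrite /bit -(subnK (ltnW H)) expnD divnDMl ?expn_gt0 //.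
by rewrite oddD oddX /= orbF subn_eq0 leqNgt H addbF.
Qed.

Lemma bit_top M j : j < 2 ^ M -> bit M (j + 2 ^ M) = true.
Proof.
by move=> H; rewrite /bit -[X in (_ + X) %/ _](mul1n (2 ^ M)) divnDMl ?expn_gt0 // divn_small.
Qed.

Lemma bit_small M j : j < 2 ^ M -> bit M j = false.
Proof. by move=> H; rewrite /bit divn_small. Qed.

Fixpoint binv (s : nat -> bool) m : nat :=
  if m is m'.+1 then s 0 + (binv (fun b => s b.+1) m').*2 else 0.

Lemma binv_lt s m : binv s m < 2 ^ m.
Proof.
elim: m s => [//|m IH] s /=; move: (IH (fun b => s b.+1)); rewrite expnS.
case: (s 0) => /=; lia.
Qed.

Lemma bitS b n : bit b.+1 n = bit b n./2.
Proof. by rewrite /bit expnS divnMA divn2. Qed.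

Lemma bit_binv s m c : c < m -> bit c (binv s m) = s c.
Proof.
elim: m s c => [//|m IH] s [|c] /= H.
- by rewrite /bit expn0 divn1 oddD odd_double addbF oddb.
- by rewrite bitS half_bit_double IH.
Qed.

Lemma RM_full m w : 0 < m -> RM m m w = (size w == 2 ^ m).
Proof. by case: m => //= m _; rewrite leqnn. Qed.

Lemma RM_rec r m w : 0 < r -> r <= m ->
  RM r m.+1 w = [&& size w == 2 ^ m.+1, RM r m (take (2 ^ m) w)
                   & RM r.-1 m (xorseq (take (2 ^ m) w) (drop (2 ^ m) w))].
Proof. by case: r => // r _ H /=; rewrite ltnS leqNgt H. Qed.

Lemma cnt_half M (w : bitseq) : size w = 2 ^ M.+1 -> forall f,
  cnt f w = cnt f (take (2 ^ M) w) + cnt (fun j => f (j + 2 ^ M)) (drop (2 ^ M) w).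
Proof. by move=> _ f; apply: cnt_take_drop. Qed.

Lemma size_take_half M (w : bitseq) : size w = 2 ^ M.+1 -> size (take (2 ^ M) w) = 2 ^ M.
Proof. move=> H; rewrite size_take H expnS ifT //; have := expn_gt0 2 M; lia. Qed.

Lemma size_drop_half M (w : bitseq) : size w = 2 ^ M.+1 -> size (drop (2 ^ M) w) = 2 ^ M.
Proof. by move=> H; rewrite size_drop H expnS; lia. Qed.

Lemma RMm1_char m w : 0 < m ->
  RM m.-1 m w = (size w == 2 ^ m) && ~~ odd (cnt (fun _ => true) w).
Proof.
elim: m w => [//|[|m] IH] w _.
- case: w => [|a [|b [|c w]]] //=; first by case: a.
  by case: a; case: b.
  by case: a; case: b.
rewrite -[m.+2.-1]/(m.+1) RM_rec // RM_full // (IH _ isT).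
case Hs: (size w == 2 ^ m.+2) => //=; move/eqP: Hs => Hs.
rewrite size_xorseq size_take_half // size_drop_half // minnn eqxx /=.
rewrite cnt_xor ?size_take_half ?size_drop_half //.
by rewrite (cnt_half _ _ Hs) oddD.
Qed.

Definition syn_ok m w :=
  ~~ odd (cnt xpredT w) && all (fun b => ~~ odd (cnt (bit b) w)) (iota 0 m).

Lemma cnt_false w : cnt (fun _ => false) w = 0.
Proof. by elim: w => //= x w IH; rewrite andbF. Qed.

Lemma syn_step M (w : bitseq) : size w = 2 ^ M.+1 ->
  let u := take (2 ^ M) w in let v := drop (2 ^ M) w in
  ~~ odd (cnt xpredT u) && syn_ok M (xorseq u v) = syn_ok M.+1 w.
Proof.
move=> Hs u v.
have Su : size u = 2 ^ M by apply: size_take_half.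
have Sv : size v = 2 ^ M by apply: size_drop_half.
rewrite /syn_ok -addn1 iotaD all_cat /= andbT.
have -> : cnt (bit M) w = cnt xpredT v.
  rewrite (cnt_half _ _ Hs) (@cnt_ext (bit M) (fun _ => false)); last first.
    by move=> j; rewrite Su; apply: bit_small.
  rewrite cnt_false add0n; apply: cnt_ext => j; rewrite Sv; exact: bit_top.
have -> : all (fun b => ~~ odd (cnt (bit b) w)) (iota 0 M) =
          all (fun b => ~~ odd (cnt (bit b) (xorseq u v))) (iota 0 M).
  apply: eq_in_all => b; rewrite mem_iota /= => Hb.
  rewrite cnt_xor ?Su ?Sv // (cnt_half _ _ Hs) oddD; congr (~~ (_ (+) odd _)).
  by apply: cnt_ext => j _; apply: bit_shift.
rewrite cnt_xor ?Su ?Sv // (cnt_half _ _ Hs) oddD.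
case: (odd (cnt xpredT u)); case: (odd (cnt xpredT v)); case: (all _ _) => //.
Qed.

Lemma RMm2_char m w : 0 < m -> RM_m2 m w = (size w == 2 ^ m) && syn_ok m w.
Proof.
elim: m w => [//|[|[|m]] IH] w _.
- rewrite /RM_m2 /=.
  case: w => [|a [|b [|c w]]] //=; first by case: a.
    by case: a; case: b.
  by case: a; case: b.
- rewrite /RM_m2 /=.
  case: w => [|a [|b [|c [|d [|e w]]]]] //=.
  + by case: a.
  + by case: a; case: b.
  + by case: a; case: b; case: c.
  + by case: a; case: b; case: c; case: d.
  + by case: a; case: b; case: c; case: d.
have -> : RM_m2 m.+3 = RM m.+1 m.+3 by rewrite /RM_m2 !subSS subn0.
rewrite RM_rec // (RMm1_char m.+2) //.
have -> : forall x, RM m.+1.-1 m.+2 x = RM_m2 m.+2 x by move=> x; rewrite /RM_m2 !subSS subn0.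
rewrite IH //.
case Hs: (size w == 2 ^ m.+3) => //=; move/eqP: Hs => Hs.
rewrite size_xorseq size_take_half // size_drop_half // minnn eqxx /=.
exact: syn_step.
Qed.

Lemma RMmm_row t m (c : 'M[bool]_(t, 2 ^ m)) i : 0 < m -> RM m m (rowseq c i).
Proof. by move=> Hm; rewrite RM_full // size_rowseq. Qed.

Lemma RMm1_row t m (c : 'M[bool]_(t, 2 ^ m)) i : 0 < m ->
  RM m.-1 m (rowseq c i) = ~~ odd (Sr c i xpredT).
Proof. by move=> Hm; rewrite RMm1_char // size_rowseq eqxx cnt_rowseq. Qed.

Lemma RMm2_row t m (c : 'M[bool]_(t, 2 ^ m)) i : 0 < m ->
  RM_m2 m (rowseq c i) =
  ~~ odd (Sr c i xpredT) && all (fun b => ~~ odd (Sr c i (bit b))) (iota 0 m).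
Proof.
move=> Hm; rewrite RMm2_char // size_rowseq eqxx /syn_ok cnt_rowseq /=.
by congr (_ && _); apply: eq_all => b; rewrite cnt_rowseq.
Qed.

Definition Mx {t n} (v : 'M[bool]_(t, n)) (E : 'I_t -> 'I_n -> bool) : 'M[bool]_(t, n) :=
  \matrix_(i, j) (v i j (+) E i j).

Lemma Sr_Mx t n (v : 'M[bool]_(t, n)) E i f :
  odd (Sr (Mx v E) i f) = odd (Sr v i f) (+) odd (\sum_j (E i j && f j)).
Proof.
rewrite /Sr -odd_sum_xor; congr odd; apply: eq_bigr => j _; rewrite mxE.
by case: (v i j); case: (E i j); case: (f j).
Qed.

Lemma d_Mx t n (v : 'M[bool]_(t, n)) E :
  d_t v (Mx v E) = #|[set j | [exists i, E i j]]|.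
Proof.
rewrite /d_t /wt_t; apply: eq_card => j; rewrite !inE.
by apply: eq_existsb => i; rewrite !mxE addKb.
Qed.

Lemma d_Mx_le t n (v : 'M[bool]_(t, n)) (E : 'I_t -> 'I_n -> bool) (A : {set 'I_n}) :
  (forall i j, E i j -> j \in A) -> d_t v (Mx v E) <= #|A|.
Proof.
move=> H; rewrite d_Mx; apply: subset_leq_card; apply/subsetP => j.
by rewrite inE => /existsP [i /H].
Qed.

Lemma card_val_mem n (s : seq nat) : #|[set j : 'I_n | val j \in s]| <= size s.
Proof.
rewrite cardE -(size_map val); apply: uniq_leq_size.
  by rewrite map_inj_uniq ?enum_uniq //; apply: val_inj.
by move=> x /mapP [j]; rewrite mem_enum inE => H ->.
Qed.

Lemma sum_list n (L : seq nat) (f : nat -> bool) :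
  uniq L -> all (fun x => x < n) L ->
  \sum_(j < n) ((val j \in L) && f j) = count f L.
Proof.
move=> U A.
have -> : \sum_(j < n) ((val j \in L) && f j) = \sum_(0 <= j < n) ((j \in L) && f j) by rewrite big_mkord.
rewrite (eq_bigr (fun j => if j \in L then nat_of_bool (f j) else 0)); last first.
  by move=> j _; case: (j \in L).
rewrite -big_mkcond -big_filter.
rewrite (perm_big L); last first.
  apply: uniq_perm; first by rewrite filter_uniq // iota_uniq.
    by [].
  move=> x; rewrite mem_filter mem_iota /= add0n; case Hx: (x \in L) => //=.
  by rewrite subn0; move/allP: A => /(_ x Hx).
elim: (L) => [|y l IH]; first by rewrite big_nil.
by rewrite big_cons IH.
Qed.

Lemma elim_lb (T : finType) (beta : T -> nat -> bool) : forall k (E : nat -> T -> bool) (J : {set T}),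
 (forall i j, i < k.+1 -> E i j -> j \in J) ->
 (forall i, i < k.+1 -> ~~ odd (\sum_j E i j)) ->
 (forall i b, i < k.+1 -> b < k.+1 -> odd (\sum_j (E i j && beta j b)) = (b == i)) ->
 k.+1 < #|J|.
Proof.
elim=> [|k IH] E J HJ Hev Hb.
  have := Hb 0 0 isT isT; rewrite eqxx => /odd_sum_exists [j0 /andP [E0 _]].
  have := Hev 0 isT; rewrite (bigD1 j0) //= E0 /= => Hr.
  have [j1 /andP [Hne E1]] : exists j1, (j1 != j0) && E 0 j1.
    apply/existsP; apply: contraR Hr => /existsPn Hn.
    by rewrite big1 // => j Hj; move: (Hn j); rewrite Hj /=; case: (E 0 j).
  have : #|[set j1; j0]| <= #|J|.
    apply: subset_leq_card; apply/subsetP => x; rewrite !inE.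
    by case/orP => /eqP ->; apply: (HJ 0).
  by rewrite cards2 Hne.
have := Hb k.+1 k.+1 (ltnSn _) (ltnSn _); rewrite eqxx.
move=> /odd_sum_exists [js /andP [Es Bs]].
pose E' i j := E i j (+) (E i js && E k.+1 j).
have Js : js \in J by apply: (HJ k.+1).
have := IH E' (J :\ js).
rewrite (cardsD1 js J) Js add1n ltnS; apply.
- move=> i j Hi; rewrite /E' !inE.
  case: (eqVneq j js) => [->|Hne] /=; first by rewrite Es andbT addbb.
  case Eij: (E i j) => /=; first by move=> _; apply: (HJ i) => //; apply: ltnW.
  by move=> /andP [_ H]; apply: (HJ k.+1).
- move=> i Hi; rewrite /E' odd_sum_xor odd_sum_and.
  by rewrite (negbTE (Hev i (ltnW Hi))) (negbTE (Hev k.+1 (ltnSn _))) andbF.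
- move=> i b Hi Hbb.
  rewrite (eq_bigr (fun j => nat_of_bool ((E i j && beta j b) (+) (E i js && (E k.+1 j && beta j b))))); last first.
    by move=> j _; rewrite /E'; case: (E i j); case: (E i js); case: (E k.+1 j); case: (beta j b).
  rewrite odd_sum_xor odd_sum_and Hb ?Hb //; try apply: ltnW => //.
  by rewrite (ltn_eqF Hbb) andbF addbF.
Qed.

Lemma cover_lists t m (v : 'M[bool]_(t, 2 ^ m)) (L : 'I_t -> seq nat) (Jl : seq nat) :
  (forall i, uniq (L i)) -> (forall i, all (fun x => x < 2 ^ m) (L i)) ->
  (forall i, {subset L i <= Jl}) ->
  (forall i (f : nat -> bool), odd (Sr (Mx v (fun i j => val j \in L i)) i f) =
               odd (Sr v i f) (+) odd (count f (L i))) /\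
  d_t v (Mx v (fun i j => val j \in L i)) <= size Jl.
Proof.
move=> U A Sb; split.
  by move=> i f; rewrite Sr_Mx sum_list.
apply: leq_trans (card_val_mem _ Jl); apply: d_Mx_le => i j H.
by rewrite inE; apply: Sb H.
Qed.

Lemma Sr_T t n (M : 'M[bool]_(t, n)) i : Sr M i xpredT = \sum_j M i j.
Proof. by apply: eq_bigr => j _; rewrite andbT. Qed.

Lemma d_eq t n (v c : 'M[bool]_(t, n)) :
  d_t v c = #|[set j | [exists i, Mx v (fun i j => c i j) i j]]|.
Proof. by []. Qed.

Definition mk {t n} (F : 'I_t -> 'I_n -> bool) : 'M[bool]_(t, n) := (\matrix_(i, j) F i j)%R.
Lemma mkE t n (F : 'I_t -> 'I_n -> bool) i j : mk F i j = F i j.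
Proof. by rewrite mxE. Qed.


Lemma upper_from_lists t m (v : 'M[bool]_(t, 2 ^ m)) (L : 'I_t -> seq nat) (Jl : seq nat) :
  0 < m ->
  (forall i, uniq (L i)) -> (forall i, all (fun x => x < 2 ^ m) (L i)) ->
  (forall i, {subset L i <= Jl}) ->
  (forall i, odd (count xpredT (L i)) = odd (Sr v i xpredT)) ->
  (forall i b, b < m -> odd (count (bit b) (L i)) = odd (Sr v i (bit b))) ->
  exists c : 'M[bool]_(t, 2 ^ m), (forall i, RM_m2 m (rowseq c i)) /\ d_t v c <= size Jl.
Proof.
move=> Hm U A Sb HT Hb.
have [H1 H2] := @cover_lists t m v L Jl U A Sb.
exists (Mx v (fun i j => val j \in L i)); split => // i.
rewrite RMm2_row // H1 HT addbb /=.
apply/allP => b; rewrite mem_iota add0n => /andP [_ Hbm].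
by rewrite H1 Hb // addbb.
Qed.

Lemma upper_small t m (v : 'M[bool]_(t, 2 ^ m)) : 0 < m ->
  exists c : 'M[bool]_(t, 2 ^ m), (forall i, RM_m2 m (rowseq c i)) /\ d_t v c <= t.+1.
Proof.
move=> Hm.
pose x i := binv (fun b => odd (Sr v i (bit b))) m.
pose L i := if odd (Sr v i xpredT) then [:: x i] else if x i == 0 then [::] else [:: 0; x i].
pose Jl := 0 :: [seq x i | i <- enum 'I_t].
have -> : t.+1 = size Jl by rewrite /= size_map size_enum_ord.
apply: (@upper_from_lists t m v L Jl Hm).
- move=> i; rewrite /L; case: ifP => // _; case: ifP => //= H.
  by rewrite inE eq_sym H.
- move=> i; have Hx := binv_lt (fun b => odd (Sr v i (bit b))) m.
  by rewrite /L; case: ifP => _ /=; rewrite ?Hx //; case: ifP => _ //=; rewrite Hx expn_gt0.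
- have Hxi : forall i, x i \in Jl.
    by move=> i; rewrite inE; apply/orP; right; apply: map_f; rewrite mem_enum.
  move=> i y; rewrite /L; case: ifP => _; first by rewrite inE => /eqP ->.
  case: ifP => _ //; rewrite !inE => /orP [/eqP ->|/eqP ->] //.
  by apply: Hxi.
- move=> i; rewrite /L; case: (odd (Sr v i xpredT)) => //; by case: ifP.
- move=> i b Hb.
  have Hxb : bit b (x i) = odd (Sr v i (bit b)) by rewrite bit_binv.
  rewrite /L; case: ifP => _ /=; first by rewrite addn0 oddb Hxb.
  case: ifP => [/eqP H0|_] /=; first by rewrite -Hxb H0 bit0n.
  by rewrite bit0n addn0 oddb Hxb.
Qed.


Lemma upper_large t m (v : 'M[bool]_(t, 2 ^ m)) : 0 < m ->
  exists c : 'M[bool]_(t, 2 ^ m), (forall i, RM_m2 m (rowseq c i)) /\ d_t v c <= m.+1.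
Proof.
move=> Hm.
pose s i b := odd (Sr v i (bit b)).
pose P i := [seq 2 ^ b | b <- iota 0 m & s i b].
pose L i := (if odd (count (s i) (iota 0 m)) != odd (Sr v i xpredT) then [:: 0] else [::]) ++ P i.
pose Jl := 0 :: [seq 2 ^ b | b <- iota 0 m].
have -> : m.+1 = size Jl by rewrite /= size_map size_iota.
have P0 : forall i, 0 \notin P i.
  by move=> i; apply/mapP => [[b _ H]]; move: (expn_gt0 2 b); rewrite -H.
have Pu : forall i, uniq (P i).
  by move=> i; rewrite map_inj_uniq ?filter_uniq ?iota_uniq //; apply: expnI.
apply: (@upper_from_lists t m v L Jl Hm).
- move=> i; rewrite /L; case: ifP => _ /=; last exact: Pu.
  by rewrite P0 Pu.
- move=> i; rewrite all_cat; apply/andP; split.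
    by case: ifP => _ //=; rewrite expn_gt0.
  apply/allP => y /mapP [b]; rewrite mem_filter mem_iota add0n => /andP [_ Hb] ->.
  by rewrite ltn_exp2l.
- move=> i y; rewrite mem_cat => /orP [|].
    by case: ifP => _ //; rewrite inE => /eqP ->; rewrite inE eqxx.
  move=> /mapP [b]; rewrite mem_filter => /andP [_ Hb] ->.
  by rewrite inE; apply/orP; right; apply: map_f.
- move=> i; rewrite /L count_cat /P count_map.
  have -> : forall l : seq nat, count (preim (expn 2) xpredT) l = size l.
    by move=> l; elim: l => //= y l ->.
  rewrite size_filter.
  by rewrite oddD; case: (odd (count (s i) (iota 0 m))); case: (odd (Sr v i xpredT)).
- move=> i b Hb; rewrite /L count_cat.
  have -> : count (bit b) (if odd (count (s i) (iota 0 m)) != odd (Sr v i xpredT)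
                           then [:: 0] else [::]) = 0.
    by case: ifP => _ //=; rewrite bit0n.
  rewrite add0n /P count_map (eq_count (a2 := pred1 b)); last first.
    by move=> y /=; rewrite bit_pow.
  rewrite count_uniq_mem ?filter_uniq ?iota_uniq // mem_filter mem_iota add0n Hb andbT.
  by rewrite andbT oddb.
Qed.


Lemma lower3 m t : 0 < m -> 0 < t -> forall rho,
  covers (RM_m2 m) t (2 ^ m) rho -> (minn t m).+1 <= rho.
Proof.
case: t => // t Hm _ rho Hc.
have Hk0 : 0 < minn t.+1 m by rewrite leq_min Hm.
have Hkt : minn t.+1 m <= t.+1 := geq_minl _ _.
have Hkm : minn t.+1 m <= m := geq_minr _ _.
pose v0 : 'M[bool]_(t.+1, 2 ^ m) :=
  mk (fun i j => (val i < minn t.+1 m) && (val j \in [:: 0; 2 ^ val i])).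
have [c [Hc1 Hd]] := Hc v0.
apply: leq_trans Hd; rewrite d_eq.
set X := Mx v0 (fun i j => c i j).
have Hv0 : forall i f, i < minn t.+1 m ->
    Sr v0 (inord i) f = count f [:: 0; 2 ^ i].
  move=> i f Hi.
  have Hit : i < t.+1 by apply: leq_trans Hi Hkt.
  have Him : i < m by apply: leq_trans Hi Hkm.
  rewrite /Sr (eq_bigr (fun j : 'I_(2 ^ m) => nat_of_bool ((val j \in [:: 0; 2 ^ i]) && f j))).
    rewrite sum_list //= ?ltn_exp2l ?expn_gt0 ?andbT //.
    by rewrite inE eq_sym -lt0n expn_gt0.
  move=> j _; have Ei : val (inord i : 'I_t.+1) = i := inordK Hit.
  by rewrite /v0 mkE Ei Hi.
have [k Ek] : exists k, minn t.+1 m = k.+1 by exists (minn t.+1 m).-1; rewrite prednK.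
rewrite Ek in Hv0 Hkt Hkm *.
apply: (@elim_lb _ (fun j b => bit b (val j)) k (fun i j => X (inord i) j)).
- move=> i j Hi H; rewrite inE; apply/existsP; exists (inord i); exact: H.
- move=> i Hi; rewrite -Sr_T Sr_Mx.
  have := Hc1 (inord i); rewrite RMm2_row // => /andP [/negbTE H _].
  have -> : \sum_j (c (inord i) j && xpredT (val j)) = Sr c (inord i) xpredT by [].
  by rewrite H Hv0.
- move=> i b Hi Hbk.
  change (odd (Sr X (inord i) (bit b)) = (b == i)).
  rewrite Sr_Mx.
  have := Hc1 (inord i); rewrite RMm2_row // => /andP [_ /allP /(_ b)].
  rewrite mem_iota add0n (leq_trans Hbk Hkm) => /(_ isT) /negbTE.
  have -> : \sum_j (c (inord i) j && bit b (val j)) = Sr c (inord i) (bit b) by [].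
  move=> ->; rewrite Hv0 //= bit0n bit_pow addn0 oddb addbF.
  by [].
Qed.

Theorem proposition13 (m t : nat) : 0 < m -> 0 < t ->
  [/\ is_Rt (RM m m) t (2 ^ m) 0,
      is_Rt (RM m.-1 m) t (2 ^ m) 1
    & is_Rt (RM_m2 m) t (2 ^ m) (minn t m).+1].
Proof.
move=> Hm Ht; split.
- split=> // v; exists (Mx v (fun i j => val j \in [::])).
  split; first by move=> i; apply: RMmm_row.
  have [_ ->] := @cover_lists t m v (fun _ => [::]) [::] (fun _ => isT) (fun _ => isT)
     (fun _ _ H => H).
  by [].
- split.
  + move=> v.
    pose L := fun i => if odd (Sr v i xpredT) then [:: 0] else [::].
    have U : forall i, uniq (L i) by move=> i; rewrite /L; case: ifP.
    have A : forall i, all (fun x => x < 2 ^ m) (L i).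
      by move=> i; rewrite /L; case: ifP => //= _; rewrite expn_gt0.
    have Sb : forall i, {subset L i <= [:: 0]}.
      by move=> i; rewrite /L; case: ifP => // _ x.
    have [H1 H2] := @cover_lists t m v L [:: 0] U A Sb.
    exists (Mx v (fun i j => val j \in L i)); split => // i.
    rewrite RMm1_row // H1 /L; by case: (odd (Sr v i xpredT)).
  + move=> rho Hc.
    pose v0 : 'M[bool]_(t, 2 ^ m) := mk (fun i j => (val i == 0) && (val j \in [:: 0])).
    have [c [Hc1 Hd]] := Hc v0.
    apply: leq_trans Hd; rewrite d_eq card_gt0; apply/set0Pn.
    have i0 : 'I_t := Ordinal Ht.
    have : odd (Sr (Mx v0 (fun i j => c i j)) (Ordinal Ht) xpredT).
      rewrite Sr_Mx.
      have := Hc1 (Ordinal Ht); rewrite RMm1_row // => /negbTE ->.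
      rewrite addbF /Sr.
      rewrite (eq_bigr (fun j : 'I_(2 ^ m) => nat_of_bool ((val j \in [:: 0]) && xpredT j))).
        by rewrite (sum_list (2 ^ m) [:: 0] xpredT) //= expn_gt0.
      by move=> j _; rewrite /v0 mkE.
    move/odd_sum_exists => [j Hj]; exists j; rewrite inE; apply/existsP.
    by exists (Ordinal Ht); move: Hj; rewrite andbT.
- split.
  + move=> v; case: (leqP t m) => H.
    * exact: upper_small.
    * exact: upper_large.
  + exact: lower3.
Qed.
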